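(* For all integers $m\ge 2$ and $k\ge 1$, the complete $k$-partite graph $K_{m*k}$ (with $k$ parts, each of size $m$) satisfies \[\mathrm{ch}(K_{m*k})\ \ge\ 2k-\left\lceil\frac{2k-1}{m}\right\rceil\ \ge\ \left\lfloor\frac{2k(m-1)}{m}\right\rfloor .\]
   Context: A list assignment $L$ for a graph $G$ assigns to each vertex $v$ a set $L(v)$ of colors. An $L$-coloring is a proper coloring $f$ of $G$ with $f(v)\in L(v)$ for all $v$. $G$ is $r$-choosable if it has an $L$-coloring for every list assignment $L$ with $|L(v)|\ge r$ for all $v$; the choice number $\mathrm{ch}(G)$ is the least such $r$. $K_{m*k}$ denotes the complete multipartite graph with $k$ parts of size $m$. *)

(* Defs.v *)
From mathcomp Require Import all_boot.
Set Implicit Arguments. Unset Strict Implicit. Unset Printing Implicit Defensive.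

Definition list_assignment (V : finType) := V -> seq nat.

Definition is_L_coloring (V : finType) (e : rel V) (L : list_assignment V)
  (f : V -> nat) : Prop :=
  (forall v, f v \in L v) /\ (forall u v, e u v -> f u != f v).

Definition choosable (V : finType) (e : rel V) (r : nat) : Prop :=
  forall L : list_assignment V, (forall v, r <= size (undup (L v))) ->
    exists f, is_L_coloring e L f.

(* Choice number: least r with choosable e r.  Every finite graph is
   #|V|-choosable (greedy), so this minimum exists. *)
Definition ch_ge (V : finType) (e : rel V) (b : nat) : Prop :=
  forall r, choosable e r -> b <= r.

(* K_{m*k}: vertices (i, j) with i the part (k parts), j the index in the part
   (m each); adjacent iff in different parts. *)
Definition Kmk_vertex (m k : nat) := ('I_k * 'I_m)%type.
Definition Kmk (m k : nat) : rel (Kmk_vertex m k) := fun u v => u.1 != v.1.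

Definition ceil_div (a b : nat) : nat := (a + b.-1) %/ b.

(* Main.v *)
Require Import Defs.
From mathcomp Require Import all_boot.
From mathcomp Require Import zify.

Theorem mainTheorem2 (m k : nat) (hm : 2 <= m) (hk : 1 <= k) :
  ch_ge (@Kmk m k) (2 * k - ceil_div (2 * k - 1) m) /\
  (2 * k * (m - 1)) %/ m <= 2 * k - ceil_div (2 * k - 1) m.
Proof.
set n := 2 * k - 1.
set q := ceil_div n m.
have hq : q = (n + m.-1) %/ m by [].
have qpos : 0 < q.
  by rewrite hq divn_gt0; lia.
have nqm : n <= q * m.
  have := divn_eq (n + m.-1) m; have := ltn_pmod (n + m.-1) (ltn_trans (isT : 0 < 1) hm).
  rewrite -hq; lia.
split; last first.
  have := divn_eq (2 * k * (m - 1)) m; have := ltn_pmod (2 * k * (m - 1)) (ltn_trans (isT : 0 < 1) hm).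
  have := divn_eq (n + m.-1) m; have := ltn_pmod (n + m.-1) (ltn_trans (isT : 0 < 1) hm).
  rewrite -hq -/n.
  set d := (2 * k * (m - 1)) %/ m.
  move=> h1 h2 h3 h4.
  have : (d + q) * m < (2 * k).+1 * m by nia.
  rewrite ltn_pmul2r; last lia.
  lia.
move=> r hch; rewrite leqNgt; apply/negP => hr.
pose L : list_assignment (Kmk_vertex m k) := fun v =>
  iota 0 (minn (v.2 * q) n) ++ iota (v.2 * q + q) (n - (v.2 * q + q)).
have memL : forall v c, c \in L v -> c < n /\ c %/ q != v.2.
  move=> v c; rewrite mem_cat !mem_iota => /orP[] /andP[h1 h2]; split.
  - lia.
  - apply/negP => /eqP e; move: h2; rewrite -e.
    have := divn_eq c q; have := ltn_pmod c qpos; lia.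
  - lia.
  - apply/negP => /eqP e; move: h1; rewrite -e.
    have := divn_eq c q; lia.
have [f [fL fe]] : exists f, is_L_coloring (@Kmk m k) L f.
  apply: hch => v.
  rewrite undup_id; last first.
    rewrite cat_uniq !iota_uniq /= andbT; apply/hasPn => c.
    rewrite !mem_iota => /andP[h1 _]; apply/negP => /andP[_ h2]; lia.
  rewrite size_cat !size_iota; lia.
have m0 : 0 < m by lia.
pose j0 : 'I_m := Ordinal m0.
have j2lt : forall i : 'I_k, f (i, j0) %/ q < m.
  move=> i; have [h _] := memL _ _ (fL (i, j0)).
  rewrite ltn_divLR //; lia.
pose j2 (i : 'I_k) : 'I_m := Ordinal (j2lt i).
pose h (x : 'I_k * bool) := f (x.1, if x.2 then j0 else j2 x.1).
have hlt : forall x, h x < n.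
  by move=> x; have [] := memL _ _ (fL (x.1, if x.2 then j0 else j2 x.1)).
pose g (x : 'I_k * bool) : 'I_n := Ordinal (hlt x).
have neq2 : forall i, f (i, j2 i) != f (i, j0).
  move=> i; apply/negP => /eqP e.
  have [_ hh] := memL _ _ (fL (i, j2 i)).
  by move: hh; rewrite e /= eqxx.
have ginj : injective g.
  move=> [i b] [i' b'] /(congr1 val) /= e.
  have ei : i = i'.
    apply/eqP; apply/negP => /negP ne.
    have := fe (i, if b then j0 else j2 i) (i', if b' then j0 else j2 i') ne.
    by rewrite /h /= in e; rewrite e eqxx.
  subst i'; congr pair.
  rewrite /h /= in e.
  case: b b' e => [] [] // e.
  - by move: (neq2 i); rewrite e eqxx.
  - by move: (neq2 i); rewrite e eqxx.
have := leq_card g ginj.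
rewrite card_prod card_ord card_bool card_ord /n; lia.
Qed.
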